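(* Let $P$ be a finite graded poset with $\hat0$ and let $\lambda$ be an ER-labeling of $P$ satisfying the rank two switching property and such that in each interval of $P$ distinct ascent-free maximal chains have distinct words of labels. Then $\lambda$ satisfies the rank two switching property, the braid relation and the cancellative property.
   Context: An E-labeling is a map $\lambda$ from the cover relations of $P$ to a poset $\Lambda$. The word of labels of a saturated chain $x_0\lessdot\cdots\lessdot x_\ell$ is $\lambda(x_0\lessdot x_1)\cdots\lambda(x_{\ell-1}\lessdot x_\ell)$; the chain is increasing if the word is strictly increasing, ascent-free if no $i$ has $\lambda(x_{i-1}\lessdot x_i)<\lambda(x_i\lessdot x_{i+1})$. ER-labeling: every closed interval has exactly one increasing maximal chain. Rank two switching property: for every saturated chain $\hat0=x_0\lessdot\cdots\lessdot x_k$ and every $i$ with $\lambda(x_{i-1}\lessdot x_i)<\lambda(x_i\lessdot x_{i+1})$ there is a unique $x_i'$ with $x_{i-1}\lessdot x_i'\lessdot x_{i+1}$, $\lambda(x_{i-1}\lessdot x_i')=\lambda(x_i\lessdot x_{i+1})$, $\lambda(x_i'\lessdot x_{i+1})=\lambda(x_{i-1}\lessdot x_i)$. Quadratic exchange: for a maximal chain $\mathbf c$ of an interval with an ascent at position $i$, $U_i(\mathbf c)$ replaces $x_i$ by $x_i'$; otherwise $U_i(\mathbf c)=\mathbf c$. For maximal chains of an interval, $\mathbf c_1\sim_\lambda\mathbf c_2$ means they are connected by a sequence of quadratic exchanges (forwards or backwards) within that interval. Braid relation: whenever a maximal chain $\mathbf c$ of an interval has strictly increasing labels at three consecutive positions $i,i+1,i+2$,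 $U_iU_{i+1}U_i(\mathbf c)=U_{i+1}U_iU_{i+1}(\mathbf c)$. Cancellative property: for all $z<x<y$, every maximal chain $\mathbf c$ of $[z,x]$ and maximal chains $\mathbf c_1,\mathbf c_2$ of $[x,y]$, $\mathbf c\cup\mathbf c_1\sim_\lambda\mathbf c\cup\mathbf c_2$ implies $\mathbf c_1\sim_\lambda\mathbf c_2$. *)

(* Defs.v *)
From mathcomp Require Import all_boot all_order.
From Stdlib Require Import Relations.
Set Implicit Arguments. Unset Strict Implicit. Unset Printing Implicit Defensive.
Import Order.Theory.
Local Open Scope order_scope.

Section Labelings.
Context {d : Order.disp_t} {P : finPOrderType d}
        {dL : Order.disp_t} {L : porderType dL}.

Definition covers (x y : P) : bool :=
  (x < y) && [forall z : P, ~~ ((x < z) && (z < y))].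

Definition graded : Prop :=
  exists rk : P -> nat, forall x y, covers x y -> rk y = (rk x).+1.

Variable lam : P -> P -> L.   (* the E-labeling; only its values on covers matter *)

(* a chain is given by the full sequence [:: x_0; x_1; ...; x_l] of its elements *)
Definition is_maxchain (x y : P) (c : seq P) : bool :=
  if c is a :: s then [&& a == x, path covers a s & last a s == y] else false.

Definition labels (c : seq P) : seq L :=
  if c is a :: s then pairmap lam a s else [::].

Definition increasing (w : seq L) : bool := sorted (fun u v => u < v) w.

Definition ascent_free (w : seq L) : bool :=
  if w is u :: s then all id (pairmap (fun a b => ~~ (a < b)) u s) else true.

Definition ER_labeling : Prop :=
  forall x y : P, x <= y ->
    exists! c, is_maxchain x y c /\ increasing (labels c).

Definition switching (bot : P) : Prop :=
  forall s : seq P, path covers bot s ->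
  forall i, 0 < i -> i < size s ->
    let x := nth bot (bot :: s) in
    lam (x i.-1) (x i) < lam (x i) (x i.+1) ->
    exists! y, [/\ covers (x i.-1) y, covers y (x i.+1),
                   lam (x i.-1) y = lam (x i) (x i.+1)
                 & lam y (x i.+1) = lam (x i.-1) (x i)].

Definition U (i : nat) (c : seq P) : seq P :=
  if c is a :: _ then
    let x := nth a c in
    if [&& 0 < i, i.+1 < size c & lam (x i.-1) (x i) < lam (x i) (x i.+1)] then
      match [pick y | [&& covers (x i.-1) y, covers y (x i.+1),
                          lam (x i.-1) y == lam (x i) (x i.+1)
                        & lam y (x i.+1) == lam (x i.-1) (x i)]] with
      | Some y => set_nth a c i y
      | None => c
      end
    else c
  else c.

Definition lam_equiv (x y : P) : relation (seq P) :=
  clos_refl_sym_trans (seq P)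
    (fun c1 c2 => [/\ is_maxchain x y c1, is_maxchain x y c2 & exists i, U i c1 = c2]).

Definition braid_relation : Prop :=
  forall (x y : P) (c : seq P), is_maxchain x y c ->
  forall i, 0 < i -> i.+3 <= size c ->
    let z := nth x c in
    lam (z i.-1) (z i) < lam (z i) (z i.+1) ->
    lam (z i) (z i.+1) < lam (z i.+1) (z i.+2) ->
    U i (U i.+1 (U i c)) = U i.+1 (U i (U i.+1 c)).

Definition cancellative : Prop :=
  forall z x y : P, z < x -> x < y ->
  forall c c1 c2 : seq P,
    is_maxchain z x c -> is_maxchain x y c1 -> is_maxchain x y c2 ->
    lam_equiv z y (c ++ behead c1) (c ++ behead c2) ->
    lam_equiv x y c1 c2.

Definition distinct_ascent_free_words : Prop :=
  forall (x y : P) (c1 c2 : seq P),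
    is_maxchain x y c1 -> is_maxchain x y c2 ->
    ascent_free (labels c1) -> ascent_free (labels c2) ->
    labels c1 = labels c2 -> c1 = c2.

End Labelings.

(* Main.v *)
Require Import Defs.
From mathcomp Require Import all_boot all_order.
From Stdlib Require Import Relations.
From mathcomp Require Import zify.
Set Implicit Arguments. Unset Strict Implicit. Unset Printing Implicit Defensive.
Import Order.Theory.

Section Proof.
Context {d : Order.disp_t} {P : finPOrderType d} {dL : Order.disp_t} {L : porderType dL}.
Context (lam : P -> P -> L) (bot : P).
Context (Hbot : forall x : P, (bot <= x)%O) (HER : ER_labeling lam)
        (Hsw : switching lam bot) (Hdaf : distinct_ascent_free_words lam).

Lemma covers_lt (x y : P) : covers x y -> (x < y)%O.
Proof. by case/andP. Qed.

Lemma chain_exists (a0 b0 : P) : (a0 <= b0)%O -> exists s, path covers a0 s /\ last a0 s = b0.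
Proof.
suff H : forall n (a b : P), #|[set z | (a < z)%O && (z < b)%O]| <= n -> (a <= b)%O ->
  exists s, path covers a s /\ last a s = b.
  by move=> H0; apply: H (leqnn _) H0.
elim=> [|n IH] a b Hn Hab;
 case: (eqVneq a b) => [->|neq]; try by exists [::].
all: have Hlt : (a < b)%O by rewrite lt_def eq_sym neq Hab.
all: case Hc: (covers a b); first by (exists [:: b]; rewrite /= Hc).
all: move: Hc; rewrite /covers Hlt /= => /forallPn [z]; rewrite negbK => /andP [Haz Hzb].
- move: Hn; rewrite leqn0 cards_eq0 => /eqP E.
  have : z \in [set z | (a < z)%O && (z < b)%O] by rewrite inE Haz Hzb.
  by rewrite E inE.
- have P1 : [set z0 | (a < z0)%O && (z0 < z)%O] \proper [set z | (a < z)%O && (z < b)%O].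
    apply/properP; split.
      by apply/subsetP => z0; rewrite !inE => /andP [H1 H2]; rewrite H1 (lt_trans H2 Hzb).
    by exists z; rewrite !inE ?Haz ?Hzb ?ltxx ?andbF.
  have P2 : [set z0 | (z < z0)%O && (z0 < b)%O] \proper [set z | (a < z)%O && (z < b)%O].
    apply/properP; split.
      by apply/subsetP => z0; rewrite !inE => /andP [H1 H2]; rewrite H2 (lt_trans Haz H1).
    by exists z; rewrite !inE ?Haz ?Hzb ?ltxx.
  have [s1 [Hs1 Hl1]] := IH a z (leq_trans (proper_card P1) Hn) (ltW Haz).
  have [s2 [Hs2 Hl2]] := IH z b (leq_trans (proper_card P2) Hn) (ltW Hzb).
  exists (s1 ++ s2); by rewrite cat_path last_cat Hl1 Hs1 Hs2 Hl2.
Qed.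


Lemma nth_catr (T : Type) (x0 : T) (p s : seq T) k : nth x0 (p ++ s) (size p + k) = nth x0 s k.
Proof. by elim: p. Qed.

Lemma local_switch (u v w : P) : covers u v -> covers v w -> (lam u v < lam v w)%O ->
  exists y, [/\ covers u y, covers y w, lam u y = lam v w & lam y w = lam u v].
Proof.
move=> Huv Hvw Hlt.
have [s0 [Hs0 Hl0]] := chain_exists (Hbot u).
have Hp : path covers bot (s0 ++ [:: v; w]) by rewrite cat_path Hs0 Hl0 /= Huv Hvw.
have Hi : ((size s0).+1 < size (s0 ++ [:: v; w]))%N by rewrite size_cat addn2.
have H := Hsw Hp (i := (size s0).+1) isT Hi.
have E1 : nth bot (bot :: s0 ++ [:: v; w]) (size s0) = u.
  by rewrite -Hl0 -cat_cons nth_cat /= ltnSn (nth_last bot (bot :: s0)).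
have E2 : nth bot (bot :: s0 ++ [:: v; w]) (size s0).+1 = v.
  by rewrite /= -(addn0 (size s0)) nth_catr.
have E3 : nth bot (bot :: s0 ++ [:: v; w]) (size s0).+2 = w.
  by rewrite /= -(addn1 (size s0)) nth_catr.
move: H; rewrite /= in E1 E2 E3 *; rewrite E1 E2 E3 => /(_ Hlt) [y [[H1 H2 H3 H4] _]].
by exists y.
Qed.

Lemma sw_uniq (u v w y y' : P) : (lam u v < lam v w)%O ->
  covers u y -> covers y w -> lam u y = lam v w -> lam y w = lam u v ->
  covers u y' -> covers y' w -> lam u y' = lam v w -> lam y' w = lam u v -> y = y'.
Proof.
move=> Hlt H1 H2 H3 H4 H1' H2' H3' H4'.
have mc : forall z, covers u z -> covers z w -> is_maxchain u w [:: u; z; w].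
  by move=> z A B; rewrite /is_maxchain /= !eqxx A B.
have af : forall z, lam u z = lam v w -> lam z w = lam u v ->
    ascent_free (labels lam [:: u; z; w]).
  by move=> z A B; rewrite /= A B andbT (lt_gtF Hlt).
have := Hdaf (mc _ H1 H2) (mc _ H1' H2') (af _ H3 H4) (af _ H3' H4').
by rewrite /= H3 H4 H3' H4' => /(_ erefl) [].
Qed.

Inductive step : seq P -> seq P -> Prop :=
 StepI p u v w q y : covers u v -> covers v w -> (lam u v < lam v w)%O ->
   covers u y -> covers y w -> lam u y = lam v w -> lam y w = lam u v ->
   step (p ++ [:: u, v, w & q]) (p ++ [:: u, y, w & q]).

Inductive star : seq P -> seq P -> Prop :=
 | star_refl c : star c c
 | star_cons c1 c2 c3 : step c1 c2 -> star c2 c3 -> star c1 c3.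

Lemma star_trans c1 c2 c3 : star c1 c2 -> star c2 c3 -> star c1 c3.
Proof. elim=> // a b c H _ IH /IH; exact: star_cons. Qed.

Lemma star1 c1 c2 : step c1 c2 -> star c1 c2.
Proof. by move=> H; apply: star_cons H (star_refl _). Qed.

Lemma step_pre pre c c' : step c c' -> step (pre ++ c) (pre ++ c').
Proof. case=> p u v w q y *; rewrite !catA; exact: StepI. Qed.

Lemma star_pre pre c c' : star c c' -> star (pre ++ c) (pre ++ c').
Proof. elim=> [c0|a0 b0 c0 H _ IH]; [exact: star_refl | exact: star_cons (step_pre pre H) IH]. Qed.

Lemma sat_repl (p q : seq P) u v w y : sorted covers (p ++ [:: u, v, w & q]) ->
  covers u y -> covers y w -> sorted covers (p ++ [:: u, y, w & q]).
Proof.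
case: p => [|a p] /=; last rewrite !cat_path /=.
  by move=> /and3P [_ _ Hq] H1 H2; rewrite H1 H2 Hq.
by case/andP=> Hp /and4P[Hl _ _ Hq] H1 H2; rewrite Hp Hl H1 H2 Hq.
Qed.

Lemma sat_mid (p q : seq P) u v w : sorted covers (p ++ [:: u, v, w & q]) ->
  covers u v /\ covers v w.
Proof.
case: p => [|a p] /=; last rewrite !cat_path /=.
  by move=> /and3P [H1 H2 _].
by case/andP=> Hp /and4P[Hl H1 H2 Hq].
Qed.

Lemma step_sat c c' : step c c' -> sorted covers c -> sorted covers c'.
Proof. by case=> p u v w q y _ _ _ H1 H2 _ _ /sat_repl; apply. Qed.

Lemma mc_sat (x y : P) (c : seq P) : is_maxchain x y c -> sorted covers c.
Proof. by case: c => //= a s /and3P[]. Qed.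

Lemma step_mc (x y : P) (c c' : seq P) : step c c' -> is_maxchain x y c -> is_maxchain x y c'.
Proof.
case=> p u v w q z _ _ _ H1 H2 _ _.
case: p => [|a p] /=; last rewrite !cat_path !last_cat /=.
  by case/and3P=> -> /and3P[_ _ ->] ->; rewrite H1 H2.
by case/and3P=> -> /andP[-> /and4P[-> _ _ ->]] ->; rewrite H1 H2.
Qed.

Lemma labels_cat (p r : seq P) u :
  labels lam (p ++ u :: r) = labels lam (rcons p u) ++ labels lam (u :: r).
Proof. by case: p => [|a p] //=; rewrite -cats1 !pairmap_cat /= -catA. Qed.

Lemma af_cons2 (a b : L) r : ascent_free (a :: b :: r) = ~~ (a < b)%O && ascent_free (b :: r).
Proof. by []. Qed.

Lemma af_behead (a : L) s : ascent_free (a :: s) -> ascent_free s.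
Proof. by case: s => // b r; rewrite af_cons2 => /andP[]. Qed.

Lemma af_mid W (a b : L) R : ascent_free (W ++ [:: a, b & R]) -> ~~ (a < b)%O.
Proof.
elim: W => [|x W IH]; first by rewrite cat0s af_cons2 => /andP[].
by rewrite cat_cons => /af_behead/IH.
Qed.

Definition hgt (l : L) : nat := #|[set pr : P * P | (lam pr.1 pr.2 < l)%O]|.

Lemma hgt_lt u v l : (lam u v < l)%O -> hgt (lam u v) < hgt l.
Proof.
move=> H; apply: proper_card; apply/properP; split.
  by apply/subsetP => pr; rewrite !inE => H'; exact: lt_trans H' H.
by exists (u, v); rewrite !inE /= ?H ?ltxx.
Qed.

Fixpoint psi (w : seq L) : nat := if w is a :: s then sumn (map hgt w) + psi s else 0.

Lemma psi_swap W a b R : hgt a < hgt b -> psi (W ++ [:: b, a & R]) < psi (W ++ [:: a, b & R]).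
Proof.
move=> H; elim: W => [|x W IH] /=; first by lia.
rewrite !map_cat !sumn_cat /=; lia.
Qed.

Lemma psi_step c c' : step c c' -> psi (labels lam c') < psi (labels lam c).
Proof.
case=> p u v w q y _ _ Hlt _ _ H3 H4.
rewrite !labels_cat /= H3 H4; apply: psi_swap; exact: hgt_lt.
Qed.

Lemma af_nostep c c' : step c c' -> ascent_free (labels lam c) -> False.
Proof.
case=> p u v w q y _ _ Hlt _ _ _ _; rewrite labels_cat /= => /af_mid.
by rewrite Hlt.
Qed.


Lemma nth_mid (T : Type) (x0 : T) (p q : seq T) u v w :
  [/\ nth x0 (p ++ [:: u, v, w & q]) (size p) = u,
      nth x0 (p ++ [:: u, v, w & q]) (size p).+1 = v &
      nth x0 (p ++ [:: u, v, w & q]) (size p).+2 = w].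
Proof. by elim: p => [|a p IH] //=. Qed.

Lemma set_nth_mid (T : Type) (x0 : T) (p q : seq T) u v w y :
  set_nth x0 (p ++ [:: u, v, w & q]) (size p).+1 y = p ++ [:: u, y, w & q].
Proof. by elim: p => [|a p IH] //=; rewrite IH. Qed.

Lemma U_apply (p q : seq P) u v w y : (lam u v < lam v w)%O ->
  covers u y -> covers y w -> lam u y = lam v w -> lam y w = lam u v ->
  U lam (size p).+1 (p ++ [:: u, v, w & q]) = p ++ [:: u, y, w & q].
Proof.
move=> Hlt H1 H2 H3 H4.
have [a [s Ec]] : exists a s, p ++ [:: u, v, w & q] = a :: s.
  by case: p => [|b p]; eexists; eexists.
rewrite Ec {1}/U; cbv iota beta zeta; rewrite -Ec.
have [E1 E2 E3] := nth_mid a p q u v w.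
rewrite /= E1 E2 E3 Hlt.
case: ifP => [_|/negP[]]; last first.
  by rewrite size_cat /= ltEnat /=; lia.
case: pickP => [y' /and4P [H1' H2' /eqP H3' /eqP H4'] | /(_ y)].
  by rewrite (sw_uniq Hlt H1' H2' H3' H4' H1 H2 H3 H4) set_nth_mid.
by rewrite H1 H2 H3 H4 !eqxx.
Qed.

Lemma dec3 (T : Type) (x0 : T) (c : seq T) i : (0 < i)%N -> (i.+1 < size c)%N ->
  c = take i.-1 c ++ [:: nth x0 c i.-1, nth x0 c i, nth x0 c i.+1 & drop i.+2 c].
Proof.
move=> Hi Hs.
rewrite -{1}(cat_take_drop i.-1 c); congr (_ ++ _).
rewrite (drop_nth x0 (_ : i.-1 < size c)); last by lia.
rewrite (prednK Hi) (drop_nth x0 (_ : i < size c)); last by lia.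
by rewrite (drop_nth x0 Hs).
Qed.

Lemma dec3s (T : Type) (x0 : T) (c : seq T) i y : (0 < i)%N -> (i.+1 < size c)%N ->
  set_nth x0 c i y = take i.-1 c ++ [:: nth x0 c i.-1, y, nth x0 c i.+1 & drop i.+2 c].
Proof.
move=> Hi Hs.
rewrite set_nthE ifT; last by lia.
rewrite -{1}(prednK Hi) (take_nth x0); last by lia.
by rewrite cat_rcons (drop_nth x0 Hs).
Qed.

Lemma U_cases i (c : seq P) : sorted covers c -> U lam i c = c \/ step c (U lam i c).
Proof.
case: c => [|a s] Hs; first by left.
rewrite /U; cbv iota beta zeta.
set c := a :: s.
case: ifP => [/and3P [Hi0 Hi1 Hlt] | _]; last by left.
case: pickP => [y /and4P [H1 H2 /eqP H3 /eqP H4] | _]; last by left.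
right.
have Hi0' : (0 < i)%N := Hi0.
have Hi1' : (i.+1 < size c)%N := Hi1.
have Ed := dec3 a Hi0' Hi1'.
rewrite (dec3s a y Hi0' Hi1') {1}Ed.
have [C1 C2] : covers (nth a c i.-1) (nth a c i) /\ covers (nth a c i) (nth a c i.+1).
  by apply: (@sat_mid (take i.-1 c) (drop i.+2 c)); rewrite -Ed.
exact: StepI.
Qed.

Lemma step_U (c c' : seq P) : step c c' -> exists i, U lam i c = c'.
Proof. by case=> p u v w q y _ _ Hlt H1 H2 H3 H4; exists (size p).+1; exact: U_apply. Qed.

Lemma ascent_dec (c : seq P) : ~~ ascent_free (labels lam c) ->
  exists p u v w q, c = p ++ [:: u, v, w & q] /\ (lam u v < lam v w)%O.
Proof.
elim: c => [|a s IH] //.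
case: s IH => [|b [|e s']] IH //.
change (labels lam [:: a, b, e & s']) with (lam a b :: lam b e :: labels lam (e :: s')).
rewrite af_cons2 negb_and negbK => /orP [H|H].
  by exists [::], a, b, e, s'.
have [p [u [v [w [q [E Hl]]]]]] := IH H.
by exists (a :: p), u, v, w, q; rewrite E.
Qed.

Lemma star_sat (c c' : seq P) : star c c' -> sorted covers c -> sorted covers c'.
Proof. elim=> // a b e St _ IH Hs; exact: IH (step_sat St Hs). Qed.

Lemma star_mc (x y : P) (c c' : seq P) : star c c' -> is_maxchain x y c -> is_maxchain x y c'.
Proof. elim=> // a b e St _ IH Hs; exact: IH (step_mc St Hs). Qed.

Lemma nf_exists (c : seq P) : sorted covers c ->
  exists f, star c f /\ ascent_free (labels lam f).
Proof.
suff H : forall n (c : seq P), psi (labels lam c) <= n -> sorted covers c ->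
  exists f, star c f /\ ascent_free (labels lam f) by apply: H (leqnn _).
elim=> [|n IH] c' Hn Hs; case Haf: (ascent_free (labels lam c'));
  try by exists c'; split=> //; exact: star_refl.
all: have [p [u [v [w [q [E Hl]]]]]] := ascent_dec (negbT Haf).
all: have [C1 C2] : covers u v /\ covers v w by apply: (@sat_mid p q); rewrite -E.
all: have [y [H1 H2 H3 H4]] := local_switch C1 C2 Hl.
all: have St : step c' (p ++ [:: u, y, w & q]) by rewrite E; exact: StepI.
all: have := psi_step St => Hlt.
  by lia.
have Hn2 : psi (labels lam (p ++ [:: u, y, w & q])) <= n by lia.
have [f [Hf Haff]] := IH _ Hn2 (step_sat St Hs).
by exists f; split => //; exact: star_cons St Hf.
Qed.


Lemma cat_split (T : Type) (p1 p2 X Y : seq T) : p1 ++ X = p2 ++ Y -> size p1 <= size p2 ->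
  exists r, p2 = p1 ++ r /\ X = r ++ Y.
Proof.
elim: p1 p2 => [|a p1 IH] [|b p2] //=; try by move=> E _; exists (b :: p2).
  by move=> ->; exists [::].
by move=> [-> E] Hs; have [r [-> ->]] := IH _ E Hs; exists r.
Qed.

Lemma hexagon (u v w t : P) : covers u v -> covers v w -> covers w t ->
  (lam u v < lam v w)%O -> (lam v w < lam w t)%O ->
  exists y1 w1 y2 w' v' w'',
  [/\ [/\ covers u y1, covers y1 w, lam u y1 = lam v w & lam y1 w = lam u v],
      [/\ covers y1 w1, covers w1 t, lam y1 w1 = lam w t & lam w1 t = lam y1 w],
      [/\ covers u y2, covers y2 w1, lam u y2 = lam y1 w1 & lam y2 w1 = lam u y1],
      [/\ covers v w', covers w' t, lam v w' = lam w t & lam w' t = lam v w] &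
      [/\ [/\ covers u v', covers v' w', lam u v' = lam v w' & lam v' w' = lam u v],
          [/\ covers v' w'', covers w'' t, lam v' w'' = lam w' t & lam w'' t = lam v' w'] &
          y2 = v' /\ w1 = w'']].
Proof.
move=> Cuv Cvw Cwt L1 L2.
have [y1 [A1 B1 E1 F1]] := local_switch Cuv Cvw L1.
have L3 : (lam y1 w < lam w t)%O by rewrite F1 (lt_trans L1 L2).
have [w1 [A2 B2 E2 F2]] := local_switch B1 Cwt L3.
have L4 : (lam u y1 < lam y1 w1)%O by rewrite E1 E2.
have [y2 [A3 B3 E3 F3]] := local_switch A1 A2 L4.
have [w' [A4 B4 E4 F4]] := local_switch Cvw Cwt L2.
have L5 : (lam u v < lam v w')%O by rewrite E4 (lt_trans L1 L2).
have [v' [A5 B5 E5 F5]] := local_switch Cuv A4 L5.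
have L6 : (lam v' w' < lam w' t)%O by rewrite F5 F4.
have [w'' [A6 B6 E6 F6]] := local_switch B5 B4 L6.
exists y1, w1, y2, w', v', w''; split=> //.
have M1 : is_maxchain u t [:: u; y2; w1; t] by rewrite /is_maxchain /= !eqxx A3 B3 B2.
have M2 : is_maxchain u t [:: u; v'; w''; t] by rewrite /is_maxchain /= !eqxx A5 A6 B6.
have W1 : labels lam [:: u; y2; w1; t] = [:: lam w t; lam v w; lam u v]
  by rewrite /= E3 E2 F3 E1 F2 F1.
have W2 : labels lam [:: u; v'; w''; t] = [:: lam w t; lam v w; lam u v]
  by rewrite /= E5 E4 E6 F4 F6 F5.
have AF : ascent_free [:: lam w t; lam v w; lam u v].
  by rewrite !af_cons2 (lt_gtF L1) (lt_gtF L2).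
have := Hdaf M1 M2; rewrite W1 W2 => /(_ AF AF erefl) [-> ->]; done.
Qed.

Lemma lc_ord p1 u1 v1 w1 q1 y1 p2 u2 v2 w2 q2 y2 :
  covers u1 v1 -> covers v1 w1 -> (lam u1 v1 < lam v1 w1)%O ->
  covers u1 y1 -> covers y1 w1 -> lam u1 y1 = lam v1 w1 -> lam y1 w1 = lam u1 v1 ->
  covers u2 v2 -> covers v2 w2 -> (lam u2 v2 < lam v2 w2)%O ->
  covers u2 y2 -> covers y2 w2 -> lam u2 y2 = lam v2 w2 -> lam y2 w2 = lam u2 v2 ->
  p1 ++ [:: u1, v1, w1 & q1] = p2 ++ [:: u2, v2, w2 & q2] -> size p1 <= size p2 ->
  exists e, star (p1 ++ [:: u1, y1, w1 & q1]) e /\ star (p2 ++ [:: u2, y2, w2 & q2]) e.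
Proof.
move=> A1 B1 C1 D1 E1 F1 G1 A2 B2 C2 D2 E2 F2 G2 E Hsz.
have [r [-> {}E]] := cat_split E Hsz.
case: r E => [|a [|b r']] /= E.
- case: E => ? ? ? ?; subst.
  rewrite cats0 (sw_uniq C1 D1 E1 F1 G1 D2 E2 F2 G2).
  by exists (p1 ++ [:: u2, y2, w2 & q2]); split; exact: star_refl.
- case: E => Ea Eb Ec Ed; subst a u2 v2 q1.
  have [Y1 [W1 [Y2 [W' [V' [W'' [[a1 b1 c1 d1] [a2 b2 c2 d2] [a3 b3 c3 d3] [a4 b4 c4 d4]
     [[a5 b5 c5 d5] [a6 b6 c6 d6] [HY HW]]]]]]]]] := hexagon A1 B1 B2 C1 C2.
  subst V' W''.
  have eY1 := sw_uniq C1 D1 E1 F1 G1 a1 b1 c1 d1; subst Y1.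
  have eY2 := sw_uniq C2 D2 E2 F2 G2 a4 b4 c4 d4; subst W'.
  exists (p1 ++ [:: u1, Y2, W1, w2 & q2]); split.
  + have L1 : (lam y1 w1 < lam w1 w2)%O by rewrite G1 (lt_trans C1 C2).
    have S1 := @StepI (rcons p1 u1) y1 w1 w2 q2 W1 E1 B2 L1 a2 b2 c2 d2.
    rewrite !cat_rcons in S1.
    apply: star_cons S1 _.
    have L2 : (lam u1 y1 < lam y1 W1)%O by rewrite F1 c2.
    exact: star1 (@StepI p1 u1 y1 W1 (w2 :: q2) Y2 D1 a2 L2 a3 b3 c3 d3).
  + rewrite -catA /=.
    have L1 : (lam u1 v1 < lam v1 y2)%O by rewrite c4 (lt_trans C1 C2).
    have S1 := @StepI p1 u1 v1 y2 (w2 :: q2) Y2 A1 a4 L1 a5 b5 c5 d5.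
    apply: star_cons S1 _.
    have L2 : (lam Y2 y2 < lam y2 w2)%O by rewrite d5 d4.
    have S2 := @StepI (rcons p1 u1) Y2 y2 w2 q2 W1 b5 b4 L2 a6 b6 c6 d6.
    rewrite !cat_rcons in S2.
    exact: star1 S2.
- case: E => Ea Eb E; subst a b.
  exists (p1 ++ [:: u1, y1 & r' ++ [:: u2, y2, w2 & q2]]); split.
  + rewrite E; have S := @StepI (p1 ++ [:: u1, y1 & r']) u2 v2 w2 q2 y2 A2 B2 C2 D2 E2 F2 G2.
    by rewrite -!catA /= in S; exact: star1 S.
  + rewrite -catA /=; apply: star1.
    case: r' E => [|b' r''] /= [? ?]; subst.
    * exact: (@StepI p1 u1 v1 u2 [:: y2, w2 & q2] y1).
    * exact: (@StepI p1 u1 v1 b' (r'' ++ [:: u2, y2, w2 & q2]) y1).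
Qed.

Lemma lc (c c1 c2 : seq P) : step c c1 -> step c c2 -> exists e, star c1 e /\ star c2 e.
Proof.
case=> p1 u1 v1 w1 q1 y1 A1 B1 C1 D1 E1 F1 G1 S2.
move E: (p1 ++ _) S2 => c0 S2; case: S2 E => p2 u2 v2 w2 q2 y2 A2 B2 C2 D2 E2 F2 G2 E.
case: (leqP (size p1) (size p2)) => Hs.
  by apply: lc_ord A1 B1 C1 D1 E1 F1 G1 A2 B2 C2 D2 E2 F2 G2 E Hs.
have [e [H1 H2]] := lc_ord A2 B2 C2 D2 E2 F2 G2 A1 B1 C1 D1 E1 F1 G1 (esym E) (ltnW Hs).
by exists e.
Qed.

Lemma nf_af (c f : seq P) : ascent_free (labels lam c) -> star c f -> f = c.
Proof. move=> A S; inversion S as [|c1 c2 c3 St]; subst=> //; case: (af_nostep St A). Qed.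

Lemma nf_unique (c : seq P) : sorted covers c -> forall f1 f2,
  star c f1 -> ascent_free (labels lam f1) -> star c f2 -> ascent_free (labels lam f2) -> f1 = f2.
Proof.
suff H : forall n (c : seq P), psi (labels lam c) <= n -> sorted covers c -> forall f1 f2,
  star c f1 -> ascent_free (labels lam f1) -> star c f2 -> ascent_free (labels lam f2) -> f1 = f2.
  by apply: H (leqnn _).
elim=> [|n IH] {}c Hn Hs f1 f2 S1 A1 S2 A2;
  case Hc: (ascent_free (labels lam c)); try by rewrite (nf_af Hc S1) (nf_af Hc S2).
all: inversion S1 as [c0 E0|c0 c1 c3 St1 S1']; subst; first by rewrite A1 in Hc.
all: inversion S2 as [c0 E0|c0 c2 c4 St2 S2']; subst; first by rewrite A2 in Hc.
all: have P1 := psi_step St1; have P2 := psi_step St2.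
  by lia.
have [e [E1 E2]] := lc St1 St2.
have Hs1 := step_sat St1 Hs; have Hs2 := step_sat St2 Hs.
have [g [Sg Ag]] := nf_exists (star_sat E1 Hs1).
have Hn1 : psi (labels lam c1) <= n by lia.
have Hn2 : psi (labels lam c2) <= n by lia.
rewrite (IH _ Hn1 Hs1 f1 g S1' A1 (star_trans E1 Sg) Ag).
by rewrite (IH _ Hn2 Hs2 f2 g S2' A2 (star_trans E2 Sg) Ag).
Qed.


Definition nf (c f : seq P) := star c f /\ ascent_free (labels lam f).

Lemma equiv_nf (x y : P) (c1 c2 : seq P) : lam_equiv lam x y c1 c2 ->
  (is_maxchain x y c1 <-> is_maxchain x y c2) /\
  (is_maxchain x y c1 -> forall f, nf c1 f <-> nf c2 f).
Proof.
elim=> {c1 c2}.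
- move=> a b [M1 M2 [i E]]; split; first by split.
  move=> _ f; case: (U_cases i (mc_sat M1)) => [E'|St].
    by rewrite -E E'.
  rewrite E in St.
  split=> [[Sf Af]|[Sf Af]]; last by split=> //; exact: star_cons St Sf.
  have [g [Sg Ag]] := nf_exists (mc_sat M2).
  have -> := nf_unique (mc_sat M1) Sf Af (star_cons St Sg) Ag.
  by [].
- by move=> a; split.
- move=> a b _ [I1 I2]; split; first by tauto.
  by move=> Ma f; have := I2 (proj2 I1 Ma) f; tauto.
- move=> a b e _ [I1 I2] _ [J1 J2]; split; first by tauto.
  by move=> Ma f; have := I2 Ma f; have := J2 (proj1 I1 Ma) f; tauto.
Qed.

Lemma star_equiv (x y : P) (c c' : seq P) : star c c' -> is_maxchain x y c ->
  lam_equiv lam x y c c'.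
Proof.
elim=> [c0 _|a b e St _ IH Ma]; first exact: rst_refl.
have Mb := step_mc St Ma.
apply: rst_trans (IH Mb).
by apply: rst_step; split=> //; exact: step_U St.
Qed.

Lemma af_lab (a b e : P) s : ascent_free (labels lam [:: a, b, e & s]) =
  ~~ (lam a b < lam b e)%O && ascent_free (labels lam [:: b, e & s]).
Proof. by []. Qed.

Lemma bub (a x : P) s : sorted covers [:: a, x & s] -> ascent_free (labels lam (x :: s)) ->
  exists z r, nf [:: a, x & s] [:: a, z & r] /\
   (z = x /\ r = s \/ exists w t, [/\ s = w :: t, (lam a x < lam x w)%O, covers a z, covers z w &
       [/\ lam a z = lam x w, lam z w = lam a x & nf [:: z, w & t] (z :: r)]]).
Proof.
elim: s a x => [|w t IH] a x Hs Haf.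
  exists x, [::]; split; last by left.
  by split=> //; exact: star_refl.
case Hlt: (lam a x < lam x w)%O; last first.
  exists x, (w :: t); split; last by left.
  by split; [exact: star_refl | rewrite af_lab Hlt].
move: Hs => /= /and3P [Cax Cxw Hp].
have [y [A B E F]] := local_switch Cax Cxw Hlt.
have Hs' : sorted covers [:: y, w & t] by rewrite /= B.
have [z [r [[S1 A1] Hz]]] := IH y w Hs' (af_behead Haf).
exists y, (z :: r); split; last first.
  by right; exists w, t; split => //; split.
split.
  apply: star_cons (@StepI [::] a x w t y Cax Cxw Hlt A B E F) _.
  exact: (@star_pre [:: a] _ _ S1).
rewrite af_lab A1 andbT E.
case: Hz => [[-> _]|[w1 [t1 [Et Lw _ _ [E1 _ _]]]]].
  by rewrite F (lt_gtF Hlt).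
by rewrite E1; move: Haf; rewrite Et af_lab => /andP [].
Qed.

Lemma inj_step (s1 : seq P) : forall (a x1 x2 : P) s2 f,
  sorted covers [:: a, x1 & s1] -> sorted covers [:: a, x2 & s2] ->
  ascent_free (labels lam (x1 :: s1)) -> ascent_free (labels lam (x2 :: s2)) ->
  lam a x1 = lam a x2 -> nf [:: a, x1 & s1] f -> nf [:: a, x2 & s2] f -> x1 = x2 /\ s1 = s2.
Proof.
elim: s1 => [|w1 t1 IH] a x1 x2 s2 f Hs1 Hs2 Af1 Af2 El [N1 B1] [N2 B2].
all: have [z1 [r1 [[S1 C1] H1]]] := bub Hs1 Af1.
all: have [z2 [r2 [[S2 C2] H2]]] := bub Hs2 Af2.
all: have Ef1 := nf_unique Hs1 N1 B1 S1 C1.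
all: have Ef2 := nf_unique Hs2 N2 B2 S2 C2.
all: subst f; case: Ef2 => ? ?; subst z2 r2.
all: case: H1 => [[? ?]|[w [t [Ew L1 a1 b1 [c1 d1 e1]]]]]; try subst z1 r1.
all: case: H2 => [[? ?]|[w' [t' [Ew' L2 a2 b2 [c2 d2 e2]]]]]; try subst x2 s2; try by [].
- by move: L2; rewrite -c2 El ltxx.
- by move: L2; rewrite -c2 El ltxx.
- by move: L1; rewrite -c1 -El ltxx.
- case: Ew => ? ?; subst w t s2.
  have Hz1 : sorted covers [:: z1, w1 & t1] by move: Hs1 => /= /and3P [_ _ ->]; rewrite b1.
  have Hz2 : sorted covers [:: z1, w' & t'] by move: Hs2 => /= /and3P [_ _ ->]; rewrite b2.
  have [? ?] := IH z1 w1 w' t' (z1 :: r1) Hz1 Hz2 (af_behead Af1) (af_behead Af2)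
     (etrans d1 (etrans El (esym d2))) e1 e2.
  subst w' t'; split=> //.
  move: Hs1 Hs2 => /= /and3P [Ca1 Cx1 _] /and3P [Ca2 Cx2 _].
  have Haw : (a <= w1)%O by apply: ltW; apply: lt_trans (covers_lt Ca1) (covers_lt Cx1).
  have [c0 [_ Hu]] := HER Haw.
  have M1 : is_maxchain a w1 [:: a; x1; w1] by rewrite /is_maxchain /= !eqxx Ca1 Cx1.
  have M2 : is_maxchain a w1 [:: a; x2; w1] by rewrite /is_maxchain /= !eqxx Ca2 Cx2.
  have I1 : increasing (labels lam [:: a; x1; w1]) by rewrite /increasing /= L1.
  have I2 : increasing (labels lam [:: a; x2; w1]) by rewrite /increasing /= L2.
  by have := etrans (esym (Hu _ (conj M1 I1))) (Hu _ (conj M2 I2)) => -[].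
Qed.


Lemma sorted_catr (p q : seq P) : sorted covers (p ++ q) -> sorted covers q.
Proof. case: p => //= b p; rewrite cat_path => /andP [_]; exact: path_sorted. Qed.

Lemma inj_pre (pre : seq P) : forall (x : P) s1 s2 f,
  sorted covers (pre ++ x :: s1) -> sorted covers (pre ++ x :: s2) ->
  ascent_free (labels lam (x :: s1)) -> ascent_free (labels lam (x :: s2)) ->
  nf (pre ++ x :: s1) f -> nf (pre ++ x :: s2) f -> s1 = s2.
Proof.
elim/last_ind: pre => [|pre a IH] x s1 s2 f Hs1 Hs2 A1 A2 [N1 B1] [N2 B2].
  by move: N1 N2 => /= /(nf_af A1) -> /(nf_af A2) [->].
rewrite !cat_rcons in Hs1 Hs2 N1 N2.
have [z1 [r1 [[S1 C1] _]]] := bub (sorted_catr Hs1) A1.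
have [z2 [r2 [[S2 C2] _]]] := bub (sorted_catr Hs2) A2.
have T1 := star_pre pre S1.
have T2 := star_pre pre S2.
have Hs1' := star_sat T1 Hs1; have Hs2' := star_sat T2 Hs2.
have [g1 [G1 D1]] := nf_exists Hs1'.
have [g2 [G2 D2]] := nf_exists Hs2'.
have E1 := nf_unique Hs1 N1 B1 (star_trans T1 G1) D1.
have E2 := nf_unique Hs2 N2 B2 (star_trans T2 G2) D2.
subst g1 g2.
have [? ?] : z1 = z2 /\ r1 = r2.
  by have [] := IH a (z1 :: r1) (z2 :: r2) f Hs1' Hs2' C1 C2 (conj G1 D1) (conj G2 D2) => ->.
subst z2 r2.
by have [_ ->] := inj_step (sorted_catr Hs1) (sorted_catr Hs2) A1 A2 erefl (conj S1 C1) (conj S2 C2).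
Qed.

Lemma U_apply2 (p q : seq P) u v w t y : (lam v w < lam w t)%O ->
  covers v y -> covers y t -> lam v y = lam w t -> lam y t = lam v w ->
  U lam (size p).+2 (p ++ [:: u, v, w, t & q]) = p ++ [:: u, v, y, t & q].
Proof.
move=> H1 H2 H3 H4 H5.
have := @U_apply (rcons p u) q v w t y H1 H2 H3 H4 H5.
by rewrite size_rcons !cat_rcons.
Qed.

Lemma braid : braid_relation lam.
Proof.
move=> x y c Mc i Hi Hs /= L1 L2.
have Hi' : (0 < i)%N := Hi.
have Hs' : (i.+2 < size c)%N := Hs.
have Ed := dec3 x Hi' (ltnW Hs').
rewrite (drop_nth x Hs') in Ed.
have Hp : size (take i.-1 c) = i.-1 by rewrite size_take; case: ifP => //; lia.
have Hsat := mc_sat Mc.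
move: L1 L2 Ed Hp.
move: (take i.-1 c) (nth x c i.-1) (nth x c i) (nth x c i.+1) (nth x c i.+2) (drop i.+3 c)
  => p u v w t q L1 L2 Ed Hp.
subst c.
have -> : i = (size p).+1 by rewrite Hp prednK.
have [Cuv Cvw] := @sat_mid p (t :: q) u v w Hsat.
have [_ Cwt] : covers v w /\ covers w t by apply: (@sat_mid (rcons p u) q); rewrite cat_rcons.
have [Y1 [W1 [Y2 [W' [V' [W'' [[a1 b1 c1 d1] [a2 b2 c2 d2] [a3 b3 c3 d3] [a4 b4 c4 d4]
   [[a5 b5 c5 d5] [a6 b6 c6 d6] [HY HW]]]]]]]]] := hexagon Cuv Cvw Cwt L1 L2.
have La : (lam Y1 w < lam w t)%O by rewrite d1 (lt_trans L1 L2).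
have Lb : (lam u Y1 < lam Y1 W1)%O by rewrite c1 c2.
have Lc : (lam u v < lam v W')%O by rewrite c4 (lt_trans L1 L2).
have Ld : (lam V' W' < lam W' t)%O by rewrite d5 d4.
rewrite (@U_apply p (t :: q) u v w Y1 L1 a1 b1 c1 d1).
rewrite (@U_apply2 p q u Y1 w t W1 La a2 b2 c2 d2).
rewrite (@U_apply p (t :: q) u Y1 W1 Y2 Lb a3 b3 c3 d3).
rewrite (@U_apply2 p q u v w t W' L2 a4 b4 c4 d4).
rewrite (@U_apply p (t :: q) u v W' V' Lc a5 b5 c5 d5).
rewrite (@U_apply2 p q u V' W' t W'' Ld a6 b6 c6 d6).
by rewrite HY HW.
Qed.

Lemma cancel : cancellative lam.
Proof.
move=> z x y Hzx Hxy c c1 c2 Mc M1 M2 Heq.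
case: c Mc Heq => [|z0 s] //= /and3P [/eqP Ez Hs /eqP Hl]; subst z0.
case: c1 M1 => [|x1 s1] // M1; case: c2 M2 => [|x2 s2] // M2.
have Ex1 : x1 = x by case/and3P: M1 => /eqP.
have Ex2 : x2 = x by case/and3P: M2 => /eqP.
subst x1 x2 => /= Heq.
set pre := belast z s.
have Ep : forall s0, z :: s ++ s0 = pre ++ x :: s0.
  by move=> s0; rewrite -cat_cons lastI Hl cat_rcons.
have Mz : is_maxchain z y (z :: s ++ s1).
  move: M1 => /and3P [_ P1 Y1].
  by rewrite /is_maxchain /= eqxx cat_path Hs Hl P1 last_cat Hl.
have [_ Hnf] := equiv_nf Heq.
have {}Hnf := Hnf Mz.
have Mz2 : is_maxchain z y (z :: s ++ s2) by have [H _] := equiv_nf Heq; apply/H.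
rewrite !Ep in Hnf Mz Mz2.
have [d1 [S1 A1]] := nf_exists (mc_sat M1).
have [d2 [S2 A2]] := nf_exists (mc_sat M2).
have MD1 := star_mc S1 M1.
have MD2 := star_mc S2 M2.
case: d1 S1 A1 MD1 => [|x1 t1] // S1 A1 MD1.
case: d2 S2 A2 MD2 => [|x2 t2] // S2 A2 MD2.
have Ex1 : x1 = x by case/and3P: MD1 => /eqP.
have Ex2 : x2 = x by case/and3P: MD2 => /eqP.
subst x1 x2.
have T1 := star_pre pre S1.
have T2 := star_pre pre S2.
have Hs1 := mc_sat Mz; have Hs2 := mc_sat Mz2.
have Hs1' := star_sat T1 Hs1; have Hs2' := star_sat T2 Hs2.
have [g1 [G1 D1]] := nf_exists Hs1'.
have [g2 [G2 D2]] := nf_exists Hs2'.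
have N1 : nf (pre ++ x :: s2) g1 by apply/Hnf; split=> //; exact: star_trans T1 G1.
have Eg := nf_unique Hs2 (proj1 N1) D1 (star_trans T2 G2) D2.
subst g2.
have Et := inj_pre Hs1' Hs2' A1 A2 (conj G1 D1) (conj G2 D1).
subst t2.
apply: rst_trans (star_equiv S1 M1) _.
exact: rst_sym (star_equiv S2 M2).
Qed.

End Proof.

Local Open Scope order_scope.

Theorem theorem3p22 (d : Order.disp_t) (P : finPOrderType d)
    (dL : Order.disp_t) (L : porderType dL) (lam : P -> P -> L) (bot : P) :
  (forall x : P, bot <= x) ->
  @graded d P ->
  ER_labeling lam ->
  switching lam bot ->
  distinct_ascent_free_words lam ->
  [/\ switching lam bot, braid_relation lam & cancellative lam].
Proof.
move=> Hbot _ HER Hsw Hdaf; split=> //.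
  exact: (braid Hbot Hsw Hdaf).
exact: (cancel Hbot HER Hsw Hdaf).
Qed.
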